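(* \[ \sum_{\substack{a\ge b,\ c\ge d\\ ad-bc=1}}\frac{1}{(ac+bd)\big(a(a+c)+b(b+d)\big)\big((a+c)c+(b+d)d\big)}=1-\frac{\pi}{4}, \] where the sum is over all nonnegative integers $a,b,c,d$ with $a\ge b$, $c\ge d$ and $ad-bc=1$. *)

(* Defs.v *)
From mathcomp Require Import all_boot all_order all_algebra.
From mathcomp Require Import all_classical all_reals all_analysis.
Set Implicit Arguments. Unset Strict Implicit. Unset Printing Implicit Defensive.
Import Order.TTheory GRing.Theory Num.Theory.
Local Open Scope classical_set_scope.
Local Open Scope ring_scope.

Definition idx_set : set (nat * nat * nat * nat) :=
  [set x | let: (a, b, c, d) := x in
           [/\ (b <= a)%N, (d <= c)%N & (a * d = b * c + 1)%N]].

Definition summand (R : realType) (x : nat * nat * nat * nat) : R :=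
  let: (a, b, c, d) := x in
  1 / (((a * c + b * d)%:R : R) * ((a * (a + c) + b * (b + d))%:R : R)
        * (((a + c) * c + (b + d) * d)%:R : R)).

(* Main.v *)
Require Import Defs.
From mathcomp Require Import all_boot all_order all_algebra.
From mathcomp Require Import all_classical all_reals all_analysis.
From mathcomp Require Import zify ring lra.
Set Implicit Arguments. Unset Strict Implicit. Unset Printing Implicit Defensive.
Import Order.TTheory GRing.Theory Num.Theory numFieldNormedType.Exports.
Local Open Scope classical_set_scope.
Definition quad := (nat * nat * nat * nat)%type.
Definition stepL (x : quad) : quad := let: (a, b, c, d) := x in (a, b, a + c, b + d)%N.
Definition stepR (x : quad) : quad := let: (a, b, c, d) := x in (a + c, b + d, c, d)%N.
Definition step (k : bool) x := if k then stepL x else stepR x.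
Definition node (z : quad) (w : seq bool) := foldl (fun x k => step k x) z w.
Fixpoint U n z : seq quad := match n with 0 => [::] | n'.+1 => z :: U n' (stepL z) ++ U n' (stepR z) end.
Fixpoint lvl n z : seq quad := match n with 0 => [:: z] | n'.+1 => lvl n' (stepL z) ++ lvl n' (stepR z) end.
Definition root : quad := (1, 0, 1, 1)%N.
Definition valid (x : quad) := let: (a, b, c, d) := x in [/\ (0 < a)%N, (0 < c)%N & (a * d = b * c + 1)%N].
Definition mu (x : quad) := let: (a, b, c, d) := x in (a + c)%N.

Lemma idx_valid x : idx_set x -> valid x.
Proof. case: x => [[[a b] c] d] [/= h1 h2 h3]; split; nia. Qed.

Lemma valid_step k x : valid x -> valid (step k x).
Proof. case: k; case: x => [[[a b] c] d] [/= h1 h2 h3]; split; nia. Qed.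

Lemma idx_step k x : idx_set x -> idx_set (step k x).
Proof. case: k; case: x => [[[a b] c] d] [/= h1 h2 h3]; split; nia. Qed.

Lemma mu_step k x : valid x -> (mu x < mu (step k x))%N.
Proof. case: k; case: x => [[[a b] c] d] [/= h1 h2 h3]; nia. Qed.

Lemma valid_node z w : valid z -> valid (node z w).
Proof. elim: w z => //= k w IH z vz; apply: IH; exact: valid_step. Qed.

Lemma idx_node z w : idx_set z -> idx_set (node z w).
Proof. elim: w z => //= k w IH z vz; apply: IH; exact: idx_step. Qed.

Lemma mu_node z w : valid z -> (mu z <= mu (node z w))%N.
Proof.
elim: w z => //= k w IH z vz; apply: leq_trans (IH _ (valid_step k vz)).
exact/ltnW/mu_step.
Qed.

Lemma node_rcons z w k : node z (rcons w k) = step k (node z w).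
Proof. by rewrite /node foldl_rcons. Qed.

Lemma step_inj k k' x y : valid x -> valid y -> step k x = step k' y -> k = k' /\ x = y.
Proof.
case: x => [[[a b] c] d]; case: y => [[[a' b'] c'] d'] [/= h1 h2 h3] [/= h1' h2' h3'].
case: k; case: k' => /= e; case: e => e1 e2 e3 e4; try (split => //; repeat f_equal; lia); exfalso; lia.
Qed.

Lemma node_inj z : valid z -> injective (node z).
Proof.
move=> vz w1; elim/last_ind: w1 => [|w1 k1 IH] w2; case/lastP: w2 => [|w2 k2] //.
- rewrite node_rcons /= => e.
  have := mu_step k2 (valid_node w2 vz); rewrite -e.
  by have := mu_node w2 vz; lia.
- rewrite node_rcons /= => e.
  have := mu_step k1 (valid_node w1 vz); rewrite e.
  by have := mu_node w1 vz; lia.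
- rewrite !node_rcons => /step_inj [] // ; try exact: valid_node.
  by move=> -> /IH ->.
Qed.

Lemma memU n z x : x \in U n z <-> exists2 w, (size w < n)%N & x = node z w.
Proof.
elim: n z x => [|n IH] z x /=; first by split => // -[].
rewrite in_cons mem_cat; split.
- case/or3P => [/eqP ->|/(IH _ _).1 [w sw ->]|/(IH _ _).1 [w sw ->]]; first by exists [::].
  + by exists (true :: w).
  + by exists (false :: w).
- case=> -[_ ->|[] w /= sw ->]; first by rewrite eqxx.
  + by apply/orP; right; apply/orP; left; apply/(IH _ _).2; exists w.
  + by apply/orP; right; apply/orP; right; apply/(IH _ _).2; exists w.
Qed.

Lemma uniqU n z : valid z -> uniq (U n z).
Proof.
elim: n z => [|n IH] z vz //=.
rewrite /= mem_cat cat_uniq !IH ?(valid_step true) ?(valid_step false) // ?andbT.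
apply/andP; split.
- apply/negP => /orP [] /memU [w _ e].
  + by have := @node_inj z vz [::] (true :: w) e.
  + by have := @node_inj z vz [::] (false :: w) e.
- apply/hasPn => x /memU [w _ ->]; apply/negP => /memU [w' _ e].
  by have := @node_inj z vz (false :: w) (true :: w') e.
all: first [exact: (valid_step true vz) | exact: (valid_step false vz)]. Qed.

Lemma complete x : idx_set x -> exists w, x = node root w.
Proof.
move: {2}(mu x) (leqnn (mu x)) => m; elim: m x => [|m IH] x.
  by case: x => [[[a b] c] d] /= le [/= h1 h2 h3]; nia.
case: x => [[[a b] c] d] /= le [/= h1 h2 h3].
have a0 : (0 < a)%N by move: h3; case: a {le h1} => //= ; lia.
have c0 : (0 < c)%N by move: h3 h2; case: c {le} => //= ; lia.
have [ac|ca|eac] := ltngtP a c.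
- have hp : idx_set (a, b, c - a, d - b)%N by split => /=; nia.
  have [|w ew] := IH _ _ hp; first by rewrite /=; nia.
  exists (rcons w true); rewrite node_rcons -ew /=; repeat f_equal; nia.
- have hp : idx_set (a - c, b - d, c, d)%N by split => /=; nia.
  have [|w ew] := IH _ _ hp; first by rewrite /=; nia.
  exists (rcons w false); rewrite node_rcons -ew /=; f_equal; repeat f_equal; nia.
- subst c; exists [::]; rewrite /root /=.
  have e : (a * (d - b) = 1)%N by rewrite mulnBr; lia.
  have a1 : a = 1%N by move/eqP: e; rewrite muln_eq1 => /andP[/eqP-> _].
  subst a; repeat f_equal; nia.
Qed.

Local Open Scope ring_scope.
Section Ana.
Variable R : realType.

Lemma atan_gt0 (t : R) : 0 < t -> 0 < atan t.
Proof. by move=> t0; rewrite -(@atan0 R) lt_atan. Qed.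

Lemma atan_bounds (t : R) : 0 < t -> t / (1 + t ^+ 2) <= atan t <= t.
Proof.
move=> t0.
have datan z : z \in `]0, t[ -> is_derive z 1 atan (1 + z ^+ 2)^-1.
  by move=> _; exact: is_derive1_atan.
have catan : {within `[0, t], continuous atan}.
  by apply: derivable_within_continuous => z _; exact: ex_derive.
have [c /andP[c0 ct] e] := MVT t0 datan catan.
rewrite atan0 subr0 subr0 in e; rewrite e.
have hc : 0 < 1 + c ^+ 2 by rewrite ltr_pwDl// sqr_ge0.
apply/andP; split.
- rewrite [_^-1 * t]mulrC ler_pM2l// lef_pV2 ?posrE ?ltr_pwDl ?sqr_ge0//.
  by rewrite lerD2l ler_pXn2r// ?nnegrE ltW.
- rewrite ler_piMl ?ltW//.
  by rewrite invf_lt1// ltrDl exprn_gt0.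
Qed.

Lemma cos_atan_gt0 (t : R) : 0 < cos (atan t).
Proof. by apply: cos_gt0_pihalf; rewrite atan_gtNpi2 atan_ltpi2. Qed.

Lemma atanD (x y : R) : 0 < x -> 0 < y -> x * y < 1 ->
  atan x + atan y = atan ((x + y) / (1 - x * y)).
Proof.
move=> x0 y0 xy1.
set a := atan x; set b := atan y.
have ca := cos_atan_gt0 x; have cb := cos_atan_gt0 y.
have ta : tan a = x by exact: atanK.
have tb : tan b = y by exact: atanK.
have sa : sin a = x * cos a by rewrite -ta /tan divfK// gt_eqF.
have sb : sin b = y * cos b by rewrite -tb /tan divfK// gt_eqF.
have cab : 0 < cos (a + b).
  rewrite cosD sa sb.
  have -> : cos a * cos b - x * cos a * (y * cos b) = cos a * cos b * (1 - x * y) by ring.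
  by rewrite !mulr_gt0// subr_gt0.
have a0 : 0 < a by exact: atan_gt0.
have b0 : 0 < b by exact: atan_gt0.
have api : a < pi / 2 by exact: atan_ltpi2.
have bpi : b < pi / 2 by exact: atan_ltpi2.
have abpi : a + b < pi / 2.
  rewrite ltNge; apply/negP => hab.
  have : cos (a + b) <= cos (pi / 2).
    rewrite le_eqVlt; case: (eqVneq (a + b) (pi / 2)) => [->|ne]; first by rewrite eqxx.
    apply/orP; right; rewrite ltr_cos ?in_itv /=.
    - by rewrite lt_neqAle eq_sym ne hab.
    - by rewrite ltW ?divr_gt0 ?pi_gt0 //= ler_pdivrMr// ler_pMr ?pi_gt0// ler1n.
    - rewrite ltW ?addr_gt0//=; move: api bpi; have := pi_gt0 R; lra.
  by rewrite cos_pihalf; lra.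
rewrite -[LHS]tanK; last first.
  by rewrite in_itv /= abpi andbT; have := pi_gt0 R; lra.
by rewrite tanD ?gt_eqF // ta tb.
Qed.

End Ana.

Definition qq (x : quad) := let: (a, b, c, d) := x in (a * c + b * d)%N.

Lemma qq_rel x : valid x ->
  (qq (stepL x) * qq (stepR x) = qq x * (qq (stepL x) + qq (stepR x)) + 1)%N.
Proof.
case: x => [[[a b] c] d] [/= h1 h2 h3].
have h4 : (a * d * (a * d) = (b * c + 1) * (b * c + 1))%N by rewrite h3.
nia.
Qed.

Lemma qq_pos x : valid x -> (0 < qq x)%N.
Proof. case: x => [[[a b] c] d] [/= h1 h2 h3]; nia. Qed.

Lemma qq_lt k x : valid x -> (qq x < qq (step k x))%N.
Proof. case: k; case: x => [[[a b] c] d] [/= h1 h2 h3]; nia. Qed.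

Section Sums.
Variable R : realType.

Lemma summandE x : summand R x =
  1 / ((qq x)%:R * (qq (stepL x))%:R * (qq (stepR x))%:R).
Proof. by case: x => [[[a b] c] d]. Qed.

Definition g (x : quad) : R := atan ((qq x)%:R^-1).
Definition f (x : quad) : R := (qq x)%:R^-1 - g x.

Lemma split_lemma x : valid x ->
  g x = g (stepL x) + g (stepR x) /\ summand R x = f x - f (stepL x) - f (stepR x).
Proof.
move=> vx; rewrite summandE /f /g.
have hrel := qq_rel vx.
have q0 := qq_pos vx.
have qL := qq_lt true vx; have qR := qq_lt false vx; rewrite /= in qL qR.
set Q := (qq x)%:R : R; set L := (qq (stepL x))%:R : R; set S := (qq (stepR x))%:R : R.
have Q0 : 0 < Q by rewrite ltr0n.
have L0 : 0 < L by rewrite ltr0n; lia.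
have S0 : 0 < S by rewrite ltr0n; lia.
have rel : L * S = Q * (L + S) + 1 by rewrite /L /S /Q -natrM hrel natrD natrM natrD.
have gs : atan Q^-1 = atan L^-1 + atan S^-1.
  rewrite atanD ?invr_gt0 //; last first.
    rewrite -invfM invf_lt1 ?mulr_gt0 // rel; nra.
  congr atan.
  have LS : L * S - 1 != 0 by rewrite rel; apply/eqP; nra.
  have -> : (L^-1 + S^-1) / (1 - L^-1 * S^-1) = (L + S) / (L * S - 1).
    by field; rewrite ?LS ?gt_eqF //; apply/and3P; split; rewrite ?gt_eqF.
  have -> : L * S - 1 = Q * (L + S) by rewrite rel; ring.
  by field; apply/andP; split; rewrite gt_eqF // addr_gt0.
split => //.
rewrite gs.
have -> : Q^-1 - (atan L^-1 + atan S^-1) - (L^-1 - atan L^-1) - (S^-1 - atan S^-1)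
   = (L * S - Q * (L + S)) / (Q * L * S) by field; rewrite ?gt_eqF.
by rewrite rel addrAC subrr add0r.
Qed.

Lemma sumU n z : valid z ->
  \sum_(x <- U n z) summand R x = f z - \sum_(x <- lvl n z) f x.
Proof.
elim: n z => [|n IH] z vz /=; first by rewrite big_nil big_seq1 subrr.
have vL := valid_step true vz; have vR := valid_step false vz.
rewrite big_cons big_cat /= IH // IH // big_cat /=.
have [_ ->] := split_lemma vz; ring.
Qed.

Lemma sum_g n z : valid z -> \sum_(x <- lvl n z) g x = g z.
Proof.
elim: n z => [|n IH] z vz /=; first by rewrite big_seq1.
have vL := valid_step true vz; have vR := valid_step false vz.
by rewrite big_cat /= IH // IH // (split_lemma vz).1.
Qed.

Lemma lvl_qq n z y : valid z -> y \in lvl n z -> (qq z + n <= qq y)%N.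
Proof.
elim: n z => [|n IH] z vz /=; first by rewrite inE => /eqP ->; rewrite addn0.
have vL := valid_step true vz; have vR := valid_step false vz.
have qL := qq_lt true vz; have qR := qq_lt false vz; rewrite /= in qL qR.
rewrite mem_cat => /orP [] /IH => [/(_ vL)|/(_ vR)] /=; lia.
Qed.

Lemma f_bound x : (0 < qq x)%N -> 0 <= f x <= ((qq x)%:R^-1) ^+ 2 * g x.
Proof.
move=> q0; rewrite /f /g.
set t := (qq x)%:R^-1 : R.
have t0 : 0 < t by rewrite invr_gt0 ltr0n.
have /andP[h1 h2] := atan_bounds t0.
have h3 : t <= (1 + t ^+ 2) * atan t.
  by rewrite -ler_pdivrMl ?ltr_pwDl ?sqr_ge0 // mulrC.
rewrite subr_ge0 h2 /=; nra.
Qed.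

Lemma tail n : 0 <= \sum_(x <- lvl n root) f x <= (n.+1%:R ^-1) ^+ 2 * (pi / 4).
Proof.
have vr : valid root by [].
apply/andP; split.
  rewrite big_seq sumr_ge0 // => x /(lvl_qq vr) h.
  by have /andP[] := @f_bound x ltac:(rewrite /= in h; lia).
have -> : pi / 4 = g root :> R by rewrite /g /= invr1 atan1.
rewrite -(sum_g n vr) mulr_sumr big_seq [X in _ <= X]big_seq.
apply: ler_sum => x /(lvl_qq vr) h; rewrite /= in h.
have /andP[_ hb] := @f_bound x ltac:(lia).
apply: le_trans hb _.
have g0 : 0 <= g x by rewrite ltW // atan_gt0 // invr_gt0 ltr0n; lia.
apply: ler_wpM2r => //.
rewrite ler_pXn2r ?nnegrE ?invr_ge0 ?ler0n //.
rewrite lef_pV2 ?posrE ?ltr0n //; last lia.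
by rewrite ler_nat; lia.
Qed.

End Sums.

Lemma U_idx n x : x \in U n root -> idx_set x.
Proof. by move=> /memU [w _ ->]; apply: idx_node. Qed.

Lemma cover (s : seq quad) : (forall x, x \in s -> idx_set x) ->
  exists n, forall x, x \in s -> x \in U n root.
Proof.
elim: s => [|y s IH] hs; first by exists 0%N.
have [n hn] : exists n, forall x, x \in s -> x \in U n root.
  by apply: IH => x xs; apply: hs; rewrite in_cons xs orbT.
have [w ew] := complete (hs y (mem_head _ _)).
exists (maxn n (size w).+1) => x; rewrite in_cons => /orP [/eqP ->|xs].
  by apply/memU; exists w => //; rewrite leq_max leqnn orbT.
have /memU [w' sw' ->] := hn x xs.
by apply/memU; exists w' => //; rewrite leq_max sw'.
Qed.

Lemma froot (R : realType) : f R root = 1 - pi / 4.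
Proof. by rewrite /f /g /= invr1 atan1. Qed.

Lemma summand_ge0 (R : realType) x : 0 <= summand R x.
Proof. by rewrite summandE divr_ge0 // !mulr_ge0 // ler0n. Qed.

Lemma partial (R : realType) n :
  (\sum_(x \in [set` U n root]) (summand R x)%:E = (1 - pi / 4 - \sum_(x <- lvl n root) f R x)%:E)%E.
Proof.
have vr : valid root by [].
by rewrite -fsbig_seq ?uniqU // sumEFin sumU // froot.
Qed.

Theorem theorem11 (R : realType) :
  (\esum_(x in idx_set) ((summand R x)%:E) = (1 - pi / 4 : R)%:E)%E.
Proof.
have upper : (\esum_(x in idx_set) ((summand R x)%:E) <= (1 - pi / 4 : R)%:E)%E.
  apply: ge_ereal_sup => _ [F [finF FI] <-].
  have [s Fs] := (finite_seqP F).1 finF.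
  have [n hn] : exists n, forall x, x \in s -> x \in U n root.
    by apply: cover => x xs; apply: FI; rewrite Fs.
  apply: (le_trans (@lee_fsum_nneg_subset _ _ _ [set` U n root] _ _ _ _ _)) => //.
  - exact: finite_seq.
  - by move=> x; rewrite Fs !mem_setE; apply: hn.
  - by move=> x _; rewrite lee_fin summand_ge0.
  rewrite partial lee_fin lerBlDr lerDl.
  by have /andP[] := tail R n.
have lower n : ((1 - pi / 4 - (n.+1%:R ^-1) ^+ 2 * (pi / 4) : R)%:E
                 <= \esum_(x in idx_set) ((summand R x)%:E))%E.
  apply: esum_ge; exists [set` U n root].
    by split; [exact: finite_seq | move=> x /= /U_idx].
  rewrite partial lee_fin lerB //.
  by have /andP[] := tail R n.
move: upper lower; case: (\esum_(x in idx_set) _)%E => [r| |] up lo.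
- apply/eqP; rewrite eq_le up /= lee_fin; apply/ler_addgt0Pr => e e0.
  have := lo (Num.truncn e^-1); rewrite lee_fin => h.
  have hn : (Num.truncn e^-1).+1%:R^-1 < e.
    by rewrite invf_plt ?posrE ?ltr0n // truncnS_gt.
  set m := (Num.truncn e^-1).+1%:R^-1 in hn h.
  have m0 : 0 <= m by rewrite invr_ge0 ler0n.
  have m1 : m <= 1 by rewrite invf_le1 ?ltr0n // ler1n.
  have pi4 : pi / 4 <= 1 :> R by have := pihalf_lt2 R; lra.
  have pi0 : 0 <= pi / 4 :> R by have := pi_gt0 R; lra.
  have : m ^+ 2 * (pi / 4) <= m.
    by rewrite expr2 -mulrA ler_piMr //; nra.
  lra.
- by move: up; rewrite leye_eq.
- by move: (lo 0%N).
Qed.
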